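(* Let $\pi$ be a standard permutation on $\mathcal{A}$ and assume $M_\pi\in\mathcal{H}(m_1,\dots,m_n)$ with $m_1\ge2$ and $m_i\ge1$ for every $2\le i\le n$. Let $m_{1,1},m_{1,2}\ge1$ be any integers with $m_{1,1}+m_{1,2}=m_1$. Then there exists an irreducible permutation $\pi'$ which is a simple extension of $\pi$ and such that $M_{\pi'}\in\mathcal{H}(m_{1,1},m_{1,2},m_2,\dots,m_n)$.
   Context: A permutation on a finite alphabet $\mathcal{A}$ ($d=|\mathcal{A}|$) is a pair $\pi=(\pi_{\mathrm t},\pi_{\mathrm b})$ of bijections $\mathcal{A}\to\{1,\dots,d\}$, displayed with top row $\alpha_{\mathrm t,1}\cdots\alpha_{\mathrm t,d}$ and bottom row $\alpha_{\mathrm b,1}\cdots\alpha_{\mathrm b,d}$, $\alpha_{\varepsilon,j}=\pi_\varepsilon^{-1}(j)$; it is irreducible if $\pi_{\mathrm t}^{-1}(\{1,\dots,j\})\ne\pi_{\mathrm b}^{-1}(\{1,\dots,j\})$ for $1\le j<d$. $\pi$ is standard if $\pi_{\mathrm b}(\alpha_{\mathrm t,d})=1$ and $\pi_{\mathrm b}(\alpha_{\mathrm t,1})=d$. Given a letter $\alpha'\notin\mathcal{A}$ and $\beta,\beta'\in\mathcal{A}$ with $(\beta,\beta')\ne(\alpha_{\mathrm t,1},\alpha_{\mathrm b,1})$, the permutation on $\mathcal{A}\cup\{\alpha'\}$ obtained by inserting $\alpha'$ just before $\beta$ in the top row and just before $\beta'$ in the bottom row is called a simple extension of $\pi$. $M_\pi$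 is the translation surface obtained by suspension: the polygon $P_\pi$ whose top boundary consists of the vectors $1+i(\pi_{\mathrm b}(\alpha)-\pi_{\mathrm t}(\alpha))$ in the order of $\pi_{\mathrm t}$ and bottom boundary of the same vectors in the order of $\pi_{\mathrm b}$, both from $0$ to $d$, with sides labelled by the same letter identified by translation. $M_\pi\in\mathcal{H}(m_1,\dots,m_n)$ means that the distinct points of $M_\pi$ coming from vertices of $P_\pi$ (other than possible removable points of angle $2\pi$ — here all $m_i\ge1$) are cone points of total angles $2\pi(m_1+1),\dots,2\pi(m_n+1)$. *)

(* Defs.v *)
From mathcomp Require Import all_boot.
Set Implicit Arguments. Unset Strict Implicit. Unset Printing Implicit Defensive.

(* A permutation pi = (pi_t, pi_b) on a finite alphabet A of letters (taken
   in nat) is represented by its two rows: top row t = [alpha_{t,1};...;alpha_{t,d}]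
   and bottom row b = [alpha_{b,1};...;alpha_{b,d}].  Then
   pi_t(x) = (index x t).+1 and pi_b(x) = (index x b).+1. *)

Definition is_perm (t b : seq nat) : Prop := uniq t /\ perm_eq t b.

Definition irreducible (t b : seq nat) : Prop :=
  forall j, 1 <= j < size t -> ~ (take j t =i take j b).

Definition standard (t b : seq nat) : Prop :=
  index (nth 0 t (size t).-1) b = 0 /\ (index (nth 0 t 0) b).+1 = size t.

Definition insert_before (a beta : nat) (s : seq nat) : seq nat :=
  take (index beta s) s ++ a :: drop (index beta s) s.

Definition simple_extension (t b t' b' : seq nat) : Prop :=
  exists (a beta beta' : nat),
    [/\ a \notin t, beta \in t, beta' \in t &
        (beta, beta') <> (nth 0 t 0, nth 0 b 0)] /\
    t' = insert_before a beta t /\ b' = insert_before a beta' b.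

(* Vertices of the polygon P_pi: top vertices T_0..T_d (true, j) and bottom
   vertices B_0..B_d (false, j), where T_j (resp. B_j) is the endpoint of the
   j-th side of the top (resp. bottom) broken line; T_0 = B_0 = 0, T_d = B_d = d. *)
Definition vertex (t : seq nat) := (bool * 'I_(size t).+1)%type.

(* T_i and B_k are identified: either they coincide as points of the plane
   (i = k = 0 or i = k = d), or they are corresponding endpoints of the two
   copies of a side alpha (T_{pi_t(a)-1} ~ B_{pi_b(a)-1}, T_{pi_t(a)} ~ B_{pi_b(a)}). *)
Definition glued (t b : seq nat) (i k : nat) : bool :=
  [|| (i == 0) && (k == 0), (i == size t) && (k == size t)
    | has (fun x => ((index x t == i) && (index x b == k))
                    || (((index x t).+1 == i) && ((index x b).+1 == k))) t].

Definition vedge (t b : seq nat) : rel (vertex t) :=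
  fun u v =>
    match u, v with
    | (true, i), (false, k) => glued t b i k
    | (false, k), (true, i) => glued t b i k
    | _, _ => false
    end.

(* Points of M_pi coming from vertices = classes of connect (vedge t b).
   For an irreducible pi, P_pi is an x-monotone polygon (top line strictly
   above the bottom one on (0,d)); the interior angle at an interior bottom
   vertex B_j (0<j<d) contains exactly one upward vertical direction, and no
   other corner does.  Hence the total angle at a point is 2pi * (number of
   interior bottom vertices in its class), i.e. m + 1 = that number. *)
Definition cone_order (t b : seq nat) (v : vertex t) : nat :=
  #|[pred w : vertex t | connect (@vedge t b) v w && ~~ w.1
                          && (0 < w.2 < size t)]|.-1.

(* M_pi \in H(ms): the orders m of the non-removable (m >= 1) points of M_pi
   coming from vertices, listed with multiplicity, are ms (up to order). *)
Definition in_stratum (t b : seq nat) (ms : seq nat) : Prop :=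
  perm_eq [seq m <- [seq @cone_order t b v | v <- enum (roots (@vedge t b))] | 0 < m] ms.

(* Main.v *)
Require Import Defs.
From mathcomp Require Import all_boot zify.
Set Implicit Arguments. Unset Strict Implicit. Unset Printing Implicit Defensive.

Lemma card_sumb (T : finType) (Q : pred T) : #|[pred v | Q v]| = \sum_v Q v.
Proof. by rewrite -sum1_card big_mkcond /=; apply: eq_bigr => v _; rewrite inE; case: (Q v). Qed.

Lemma count_enum_card (T : finType) (A Q : pred T) : count Q (enum A) = #|[pred v | A v && Q v]|.
Proof.
rewrite card_sumb -sum1_count big_mkcond /= big_enum /= big_mkcond /=.
by apply: eq_bigr => v _; rewrite -topredE /=; case: (A v); case: (Q v).
Qed.

Section Strat.
Variables (V : finType) (e : rel V) (P : pred V).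
Hypothesis sym : connect_sym e.
Definition wt v := #|[pred u | connect e v u && P u]|.

Lemma wt_root v : wt v = wt (root e v).
Proof. apply: eq_card => u; rewrite !inE (same_connect sym (connect_root e v)) //. Qed.

Lemma key k : #|[pred v | P v && (wt v == k)]| = k * #|[pred r | roots e r && (wt r == k)]|.
Proof.
rewrite !card_sumb (partition_big (root e) (roots e)) /=; last by move=> v _; apply: roots_root.
rewrite big_distrr /= big_mkcond /=; apply: eq_bigr => r _.
case Hr: (roots e r) => /=; last by rewrite muln0.
transitivity (\sum_(i | root e i == r) ((wt r == k) && P i)).
  by apply: eq_bigr => v /eqP Hv; rewrite wt_root Hv andbC.
case: eqP => [<-|_] /=; last by rewrite big1 ?muln0.
rewrite muln1 /wt card_sumb big_mkcond /=; apply: eq_bigr => u _.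
rewrite -root_connect //; have Hr2 : root e r = r by apply/eqP.
by rewrite Hr2 eq_sym; case: (_ == _).
Qed.

Lemma cntL n : count_mem n [seq m <- [seq (wt v).-1 | v <- enum (roots e)] | 0 < m]
   = (0 < n) * #|[pred r | roots e r && (wt r == n.+1)]|.
Proof.
rewrite count_filter count_map count_enum_card; case: n => [|n].
  by rewrite mul0n; apply: eq_card0 => v; rewrite !inE /=; case: (wt v) => [|[|w]] //=; rewrite andbF.
rewrite mul1n; apply: eq_card => v; rewrite !inE /=; congr (_ && _).
by case: (wt v) => [|[|w]] //=; rewrite ?andbT ?andbF.
Qed.

Lemma strat_iff ms :
  perm_eq [seq m <- [seq (wt v).-1 | v <- enum (roots e)] | 0 < m] ms <->
  all (fun m => 0 < m) ms /\ (forall n, 0 < n -> #|[pred v | P v && (wt v == n.+1)]| = n.+1 * count_mem n ms).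
Proof.
split.
  move/permP => H; split.
    apply/allP => x xms; rewrite lt0n; apply/eqP => x0; subst x.
    have := H (pred1 0); rewrite cntL mul0n => /esym /count_memPn.
    by rewrite xms.
  by move=> n n0; rewrite key -(H (pred1 n)) cntL n0 mul1n.
case=> Hall H; apply/allP => x _; apply/eqP; rewrite cntL.
case: x => [|n] /=.
  by rewrite mul0n; apply/esym/count_memPn; apply/negP => /(allP Hall).
rewrite mul1n; apply/eqP; rewrite -(eqn_pmul2l (ltn0Sn n.+1)) -key H //.
Qed.
End Strat.

Definition Wt n (f : 'I_n.+1 -> 'I_n.+1) (k : 'I_n.+1) :=
  #|[pred l : 'I_n.+1 | fconnect f k l && (0 < l < n)]|.
Definition Nt n (f : 'I_n.+1 -> 'I_n.+1) x :=
  #|[pred k : 'I_n.+1 | (0 < k < n) && (Wt f k == x)]|.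

Lemma card_false n (R : pred 'I_n) :
  #|[pred u : bool * 'I_n | ~~ u.1 && R u.2]| = #|[pred l | R l]|.
Proof.
have inj : injective (pair false : 'I_n -> bool * 'I_n) by move=> x y [].
rewrite -(card_image inj [pred l | R l]).
apply: eq_card => -[bb l]; rewrite !inE; case: bb => /=.
  by apply/esym/negbTE/negP => /imageP[x _ []].
by rewrite mem_image.
Qed.

Section Tau.
Variables (t b : seq nat).
Hypothesis Hp : is_perm t b.
Local Notation d := (size t).
Definition fS i := if i < size t then index (nth 0 t i) b else size t.
Definition gE k := if k == 0 then 0 else (index (nth 0 b k.-1) t).+1.
Definition fE i := if i == 0 then 0 else (index (nth 0 t i.-1) b).+1.
Definition gS k := if k < size t then index (nth 0 b k) t else size t.
Definition taun k := fS (gE k).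

Lemma ut : uniq t. Proof. by case: Hp. Qed.
Lemma ub : uniq b. Proof. by case: Hp => u /perm_uniq <-. Qed.
Lemma sb : size b = d. Proof. by case: Hp => _ /perm_size. Qed.
Lemma mtb x : (x \in t) = (x \in b). Proof. by case: Hp => _ /perm_mem. Qed.

Lemma nth_t i : i < d -> nth 0 t i \in b.
Proof. by move=> H; rewrite -mtb mem_nth. Qed.
Lemma nth_b i : i < d -> nth 0 b i \in t.
Proof. by move=> H; rewrite mtb mem_nth // sb. Qed.

Lemma fS_le i : i <= d -> fS i <= d.
Proof. rewrite /fS; case: ifP => // H _; apply: ltnW; rewrite -sb index_mem nth_t //. Qed.
Lemma gE_le k : k <= d -> gE k <= d.
Proof. rewrite /gE; case: ifP => // /negbT H Hk; rewrite index_mem nth_b //; case: k H Hk => //. Qed.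
Lemma fE_le i : i <= d -> fE i <= d.
Proof. rewrite /fE; case: ifP => // /negbT H Hk; rewrite -sb index_mem nth_t //; case: i H Hk => //. Qed.
Lemma gS_le k : k <= d -> gS k <= d.
Proof. rewrite /gS; case: ifP => // H _; apply: ltnW; rewrite index_mem nth_b //. Qed.

Lemma fE_gE k : k <= d -> fE (gE k) = k.
Proof.
rewrite /gE /fE; case: k => [|k] //= Hk.
by rewrite nth_index ?nth_b // index_uniq ?ub ?sb.
Qed.
Lemma gE_fE i : i <= d -> gE (fE i) = i.
Proof.
rewrite /gE /fE; case: i => [|i] //= Hk.
by rewrite nth_index ?nth_t // index_uniq ?ut.
Qed.
Lemma gS_fS i : i <= d -> gS (fS i) = i.
Proof.
rewrite /gS /fS; case: (ltnP i d) => Hi Hd; last by rewrite ltnn; apply/eqP; rewrite eqn_leq Hi Hd.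
by rewrite -sb index_mem nth_t // nth_index ?nth_t // index_uniq ?ut.
Qed.

Lemma taun_le k : k <= d -> taun k <= d.
Proof. by move=> H; apply/fS_le/gE_le. Qed.
Lemma taun_inj k l : k <= d -> l <= d -> taun k = taun l -> k = l.
Proof.
move=> Hk Hl H; rewrite -(fE_gE Hk) -(fE_gE Hl) -(gS_fS (gE_le Hk)) -(gS_fS (gE_le Hl)).
by rewrite /taun in H; rewrite H.
Qed.

Lemma glued_fE i : i <= d -> glued t b i (fE i).
Proof.
rewrite /glued /fE; case: i => [|i] Hi; first by rewrite eqxx.
apply/orP; right; apply/orP; right; apply/hasP; exists (nth 0 t i); first by rewrite mem_nth.
by rewrite index_uniq ?ut // !eqxx orbT.
Qed.
Lemma glued_fS i : i <= d -> glued t b i (fS i).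
Proof.
rewrite /glued /fS; case: ltnP => Hi Hd.
  apply/orP; right; apply/orP; right; apply/hasP; exists (nth 0 t i); first by rewrite mem_nth.
  by rewrite index_uniq ?ut // !eqxx.
have -> : i = size t by apply/eqP; rewrite eqn_leq Hd.
by rewrite eqxx orbT.
Qed.
Lemma glued_inv i k : glued t b i k -> k = fE i \/ k = fS i.
Proof.
rewrite /glued /fE /fS; case/or3P.
- by case/andP => /eqP -> /eqP ->; left.
- by case/andP => /eqP -> /eqP ->; right; rewrite ltnn.
case/hasP => x xt /orP[] /andP[/eqP <- /eqP <-].
  by right; rewrite index_mem xt nth_index.
by left; rewrite /= nth_index.
Qed.

Definition tauo : 'I_(size t).+1 -> 'I_(size t).+1 := fun k => inord (taun k).
Lemma tauoE k : (tauo k : nat) = taun k.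
Proof. have H : taun k < (size t).+1 by rewrite ltnS; apply: taun_le; rewrite -ltnS.
exact: (inordK H). Qed.
Lemma tauo_inj : injective tauo.
Proof.
move=> k l H; apply/val_inj; apply: taun_inj.
- by rewrite -ltnS; apply: ltn_ord.
- by rewrite -ltnS; apply: ltn_ord.
by rewrite -!tauoE H.
Qed.

Lemma vedge_sym : symmetric (@vedge t b).
Proof. by case=> [[] i] [[] j]. Qed.

Definition apred (k : 'I_(size t).+1) : pred (vertex t) := fun v =>
  if v.1 then [exists l : 'I_(size t).+1, fconnect tauo k l && glued t b v.2 l]
  else fconnect tauo k v.2.

Lemma connect_tau (k l : 'I_(size t).+1) :
  connect (@vedge t b) (false, k) (false, l) = fconnect tauo k l.
Proof.
apply/idP/idP.
  have cl : closed (@vedge t b) (apred k).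
    apply: (intro_closed (sym_connect_sym vedge_sym)).
    case=> [[] i] [[] j] //=; rewrite -!topredE /= /apred /=.
      move/glued_inv => Hj /existsP[l' /andP[Hl' /glued_inv Hl]].
      have lt_i : i <= d by rewrite -ltnS.
      have E : tauo (inord (fE i)) = inord (fS i).
        have h1 : fE i < (size t).+1 by rewrite ltnS; apply: fE_le.
        have h2 : fS i < (size t).+1 by rewrite ltnS; apply: fS_le.
        apply/val_inj => /=; rewrite tauoE (inordK h1) (inordK h2) /taun gE_fE //.
      have ej : j = inord (fE i) \/ j = inord (fS i).
        by case: Hj => H; [left|right]; rewrite -H inord_val.
      have el : l' = inord (fE i) \/ l' = inord (fS i).
        by case: Hl => H; [left|right]; rewrite -H inord_val.
      case: ej el => -> [] El; subst l' => //.
        rewrite -E in Hl'; apply: connect_trans Hl' _.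
        by rewrite fconnect_sym; [apply: fconnect1 | apply: tauo_inj].
      by rewrite -E; apply: connect_trans Hl' (fconnect1 _ _).
    by move=> Hg Hi; apply/existsP; exists i; rewrite Hi Hg.
  by move/(closed_connect cl); rewrite -!topredE /= /apred /= connect0 => /esym.
move/iter_findex => <-; elim: (findex _ _ _) => [|n IH]; first exact: connect0.
apply: connect_trans IH _; rewrite iterS; set x := iter n tauo k.
have lx : x <= d by rewrite -ltnS.
apply: (@connect_trans _ _ (true, inord (gE x))); apply: connect1 => /=; rewrite inordK ?ltnS ?gE_le //.
  by rewrite -{2}(fE_gE lx); apply: glued_fE; apply: gE_le.
by rewrite tauoE; apply: glued_fS; apply: gE_le.
Qed.

Lemma char ms : in_stratum t b ms <->
  all (fun m => 0 < m) ms /\ (forall n, 0 < n -> Nt tauo n.+1 = n.+1 * count_mem n ms).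
Proof.
rewrite /in_stratum.
pose P := fun u : vertex t => ~~ u.1 && (0 < u.2 < size t).
have -> : [seq @cone_order t b v | v <- enum (roots (@vedge t b))] =
          [seq (wt (@vedge t b) P v).-1 | v <- enum (roots (@vedge t b))].
  apply: eq_map => v; rewrite /cone_order /wt; congr (_.-1); apply: eq_card => u.
  by rewrite !inE /P /= !andbA.
apply: (iff_trans (strat_iff P (sym_connect_sym (@vedge_sym)) ms)).
have Hw : forall l, wt (@vedge t b) P (false, l) = Wt tauo l.
  move=> l; rewrite /wt /Wt -card_false; apply: eq_card => -[bb l'].
  by rewrite !inE /P; case: bb => /=; rewrite ?andbF ?connect_tau.
have HN : forall x, #|[pred v | P v && (wt (@vedge t b) P v == x)]| = Nt tauo x.
  move=> x; rewrite /Nt -card_false; apply: eq_card => -[bb l].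
  by rewrite !inE /P; case: bb => /=; rewrite ?Hw.
by split => -[H1 H2]; split => // n n0; [rewrite -HN | rewrite HN]; apply: H2.
Qed.
End Tau.

Definition ins (s : seq nat) p a := take p s ++ a :: drop p s.

Section Ins.
Variables (s : seq nat) (p a : nat).
Hypothesis Hp : p <= size s.

Lemma size_ins : size (ins s p a) = (size s).+1.
Proof. by rewrite /ins size_cat /= size_takel // size_drop addnS subnKC. Qed.

Lemma nth_ins_s i : nth 0 (ins s p a) (i + (p <= i)) = nth 0 s i.
Proof.
rewrite /ins nth_cat size_takel //.
case: (ltnP i p) => Hi.
  by rewrite addn0 Hi nth_take.
rewrite addn1 ltnNge ltnW //= subSn //=.
by rewrite nth_drop subnKC.
Qed.

Lemma nth_ins_p : nth 0 (ins s p a) p = a.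
Proof. by rewrite /ins nth_cat size_takel // ltnn subnn. Qed.

Lemma mem_ins x : (x \in ins s p a) = (x == a) || (x \in s).
Proof. by rewrite /ins mem_cat inE orbCA -mem_cat cat_take_drop. Qed.

Lemma perm_ins : perm_eq (ins s p a) (a :: s).
Proof. by rewrite /ins -cat1s perm_catCA cat_take_drop. Qed.

Hypothesis Ha : a \notin s.
Hypothesis Us : uniq s.

Lemma index_ins_a : index a (ins s p a) = p.
Proof.
rewrite /ins index_cat ifN; last by apply/negP => /mem_take; apply/negP.
by rewrite /= eqxx addn0 size_takel.
Qed.

Lemma index_ins x : x \in s -> index x (ins s p a) = index x s + (p <= index x s).
Proof.
move=> xs; have xa : x != a by apply/eqP => E; move: Ha; rewrite -E xs.
rewrite /ins index_cat in_take //; case: ltnP => Hi.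
  by rewrite addn0; rewrite -{2}(cat_take_drop p s) index_cat in_take // Hi.
have E : index x s = p + index x (drop p s).
  by rewrite -{1}(cat_take_drop p s) index_cat ifN ?size_takel // in_take // -leqNgt.
by rewrite /= eq_sym (negbTE xa) size_takel // E addn1 addnS.
Qed.
End Ins.

Section Ext.
Variables (t b : seq nat) (a p q : nat).
Hypotheses (Hp : is_perm t b) (Ha : a \notin t) (Hpd : p < size t) (Hqd : q < size t).
Local Notation t' := (ins t p a).
Local Notation b' := (ins b q a).

Lemma Hab : a \notin b. Proof. by rewrite -(mtb Hp). Qed.
Lemma sb' : size b = size t. Proof. exact: sb Hp. Qed.

Lemma size_t' : size t' = (size t).+1.
Proof. by rewrite size_ins // ltnW. Qed.

Lemma perm_t' : is_perm t' b'.
Proof.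
case: Hp => ut ptb; split.
  by rewrite (perm_uniq (perm_ins _ _ _)) /= Ha ut.
apply: perm_trans (perm_ins _ _ _) _; rewrite perm_sym.
apply: perm_trans (perm_ins _ _ _) _; rewrite perm_cons perm_sym //.
Qed.

Lemma fS'_s i : i <= size t -> fS t' b' (i + (p <= i)) = fS t b i + (q <= fS t b i).
Proof.
move=> Hi; rewrite /fS size_t'; case: (ltnP i (size t)) => Hit.
  have -> : i + (p <= i) < (size t).+1 by case: (p <= i) => /=; lia.
  rewrite nth_ins_s; last by apply: ltnW.
  have Hq' : q <= size b by rewrite sb' ltnW.
  by rewrite (index_ins Hq' Hab) // -(mtb Hp) mem_nth.
have -> : i = size t by lia.
by rewrite (ltnW Hpd) addn1 ltnn (ltnW Hqd) addn1.
Qed.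

Lemma fS'_p : fS t' b' p = q.
Proof.
have Hq' : q <= size b by rewrite sb' ltnW.
by rewrite /fS size_t' ltnS (ltnW Hpd) nth_ins_p ?(ltnW Hpd) // index_ins_a // Hab.
Qed.

Lemma gE'_e k : k <= size t -> gE t' b' (k + (q < k)) = gE t b k + (p < gE t b k).
Proof.
rewrite /gE; case: k => [|k] Hk //=.
have Hq' : q <= size b by rewrite sb' ltnW.
rewrite addSn /= ltnS nth_ins_s //.
have xt : nth 0 b k \in t by rewrite (mtb Hp) mem_nth // sb'.
by rewrite (index_ins (ltnW Hpd) Ha xt) ltnS.
Qed.

Lemma gE'_q1 : gE t' b' q.+1 = p.+1.
Proof.
have Hq' : q <= size b by rewrite sb' ltnW.
by rewrite /gE /= nth_ins_p // index_ins_a // ltnW.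
Qed.

Lemma taun'_e k : k <= size t ->
  taun t' b' (k + (q < k)) = if gE t b k == p then q else taun t b k + (q <= taun t b k).
Proof.
move=> Hk; rewrite /taun gE'_e //; case: eqP => [->|ne]; first by rewrite ltnn addn0 fS'_p.
have -> : p < gE t b k = (p <= gE t b k) by rewrite ltn_neqAle eq_sym; move/eqP: ne => ->.
by rewrite fS'_s // gE_le.
Qed.

Lemma taun'_q1 : taun t' b' q.+1 = fS t b p + (q <= fS t b p).
Proof. by rewrite /taun gE'_q1 -fS'_s ?leqnn ?addn1 // ltnW. Qed.
End Ext.

Lemma cycle_fconnect (T : finType) (f : T -> T) x n y :
  0 < n -> iter n f x = x -> fconnect f x y = (y \in traject f x n).
Proof.
move=> n0 Hn; apply/idP/idP.
  move/iter_findex => <-; apply/loopingP; rewrite /looping Hn.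
  by case: n n0 {Hn} => // n _; rewrite mem_head.
by case/trajectP => i _ ->; apply: fconnect_iter.
Qed.

Lemma card_count (T : finType) (s : seq T) (P : pred T) :
  uniq s -> #|[pred l | (l \in s) && P l]| = count P s.
Proof.
move=> us; rewrite -size_filter -(card_uniqP _); last by apply: filter_uniq.
by apply: eq_card => l; rewrite !inE mem_filter andbC.
Qed.

Lemma cardW (T : finType) (f : T -> T) (P : pred T) x : injective f ->
  #|[pred l | fconnect f x l && P l]| = count P (orbit f x).
Proof.
move=> fi; rewrite -card_count ?orbit_uniq //; apply: eq_card => l.
by rewrite !inE fconnect_orbit.
Qed.

Lemma card_split (T : finType) (A B : pred T) :
  #|[pred y | A y]| = #|[pred y | B y && A y]| + #|[pred y | ~~ B y && A y]|.
Proof.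
rewrite (card_sumb A) (card_sumb (fun y => B y && A y)) (card_sumb (fun y => ~~ B y && A y)).
rewrite -big_split /=; apply: eq_bigr => y _.
by case: (A y); case: (B y).
Qed.

Lemma card_class (T : finType) (O A : pred T) (W : T -> nat) w x :
  (forall y, O y -> W y = w) -> #|[pred y | O y && A y]| = w ->
  #|[pred y | O y && (A y && (W y == x))]| = (x == w) * w.
Proof.
move=> HW Hc; case: eqP => [->|ne]; rewrite ?mul1n ?mul0n.
  rewrite -[in RHS]Hc; apply: eq_card => y; rewrite !inE.
  by case Oy: (O y); rewrite //= HW // eqxx andbT.
apply: eq_card0 => y; rewrite !inE; case Oy: (O y) => //=.
by rewrite HW // andbC; case: eqP => // E; case: ne.
Qed.

Section Core.
Variables (d : nat) (tau : 'I_d.+1 -> 'I_d.+1) (tau' : 'I_d.+2 -> 'I_d.+2).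
Hypotheses (itau : injective tau) (itau' : injective tau').
Variables (k0 q : 'I_d.+1) (r : nat).
Local Notation L := (order tau k0).
Hypotheses (r0 : 0 < r) (rL : r < L) (Hq : q = iter r tau k0) (Iq : 0 < q < d).
Definition e (k : 'I_d.+1) : 'I_d.+2 := inord (k + (q < k)).
Definition s (k : 'I_d.+1) : 'I_d.+2 := inord (k + (q <= k)).
Hypotheses (H1 : forall k, k != k0 -> tau' (e k) = s (tau k))
           (H2 : tau' (e k0) = e q) (H3 : tau' (s q) = s (tau k0)).

Lemma val_e k : (e k : nat) = k + (q < k).
Proof. have H : k + (q < k) < d.+2 by have := ltn_ord k; case: (q < k); lia. exact: inordK H. Qed.
Lemma val_s k : (s k : nat) = k + (q <= k).
Proof. have H : k + (q <= k) < d.+2 by have := ltn_ord k; case: (q <= k); lia. exact: inordK H. Qed.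
Lemma e_inj : injective e.
Proof. move=> x y /(congr1 (@nat_of_ord _)); rewrite !val_e => H; apply/val_inj => /=; move: H; case: ltnP; case: ltnP; lia. Qed.
Lemma s_inj : injective s.
Proof. move=> x y /(congr1 (@nat_of_ord _)); rewrite !val_s => H; apply/val_inj => /=; move: H; case: leqP; case: leqP; lia. Qed.
Lemma s_e k : k != q -> s k = e k.
Proof. move=> /eqP H; apply/val_inj; rewrite /= val_e val_s; have : (k : nat) <> q by move=> E; apply: H; apply/val_inj. case: ltnP; case: leqP; lia. Qed.
Lemma e_ne_sq k : e k != s q.
Proof. apply/eqP => /(congr1 (@nat_of_ord _)); rewrite val_e val_s leqnn; case: ltnP; lia. Qed.
Lemma eq_q : e q = s q -> False.
Proof. by move/eqP; rewrite (negbTE (e_ne_sq q)). Qed.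

Definition I (k : 'I_d.+1) := 0 < k < d.
Definition I' (k : 'I_d.+2) := 0 < k < d.+1.
Lemma Ie k : I' (e k) = I k.
Proof. rewrite /I /I' val_e; have := ltn_ord k; move: Iq; case: ltnP => H; case: (ltngtP k 0); lia. Qed.
Lemma Is k : I' (s k) = I k.
Proof. rewrite /I /I' val_s; have := ltn_ord k; move: Iq; case: leqP => H; case: (ltngtP k 0); lia. Qed.

Lemma iterL : iter L tau k0 = k0.
Proof. exact: iter_order. Qed.
Lemma iter_inj_lt i j : i < L -> j < L -> iter i tau k0 = iter j tau k0 -> i = j.
Proof. by move=> Hi Hj H; rewrite -(findex_iter Hi) -(findex_iter Hj) H. Qed.
Lemma iter_ne_k0 i : 0 < i < L -> iter i tau k0 != k0.
Proof.
case/andP => i0 iL; apply/eqP => H.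
have := @iter_inj_lt i 0 iL (leq_ltn_trans (leq0n _) iL); rewrite H /= => /(_ erefl).
by move=> E; rewrite E in i0.
Qed.
Lemma q_ne_k0 : q != k0.
Proof. by rewrite Hq iter_ne_k0 // r0 rL. Qed.
Lemma iter_ne_q j : r < j <= L -> iter j tau k0 != q.
Proof.
case/andP => rj jL; case: (ltngtP j L) jL => // [jL _|-> _].
  by apply/eqP; rewrite Hq => /iter_inj_lt => /(_ jL rL) E; rewrite E ltnn in rj.
by rewrite iterL eq_sym q_ne_k0.
Qed.

Lemma O1_iter i : i <= L - r -> iter i tau' (e q) = e (iter (r + i) tau k0).
Proof.
elim: i => [|i IH] Hi; first by rewrite addn0 -Hq.
rewrite iterS IH; last by lia.
rewrite H1; last by rewrite iter_ne_k0 //; apply/andP; split; lia.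
by rewrite -iterS -addnS s_e // iter_ne_q //; apply/andP; split; lia.
Qed.
Lemma O1_end : iter (L - r).+1 tau' (e q) = e q.
Proof. by rewrite iterS O1_iter // subnKC ?(ltnW rL) // iterL H2. Qed.

Lemma O2_iter i : 0 < i <= r -> iter i tau' (s q) = s (iter i tau k0).
Proof.
elim: i => [|i IH] // Hi; case: i IH Hi => [|i] IH Hi; first by rewrite /= H3.
rewrite iterS IH; last by lia.
rewrite s_e; last first.
  have iL : i.+1 < L by lia.
  by apply/eqP => E; have := iter_inj_lt iL rL; rewrite E -Hq => /(_ erefl); lia.
by rewrite H1 // iter_ne_k0 //; apply/andP; split; lia.
Qed.
Lemma O2_end : iter r tau' (s q) = s q.
Proof. rewrite O2_iter; first by rewrite -Hq. by rewrite r0 leqnn. Qed.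

Local Notation S1 := (traject tau q (L - r).+1).
Local Notation S2 := (traject tau (tau k0) r).

Lemma traj1 : traject tau' (e q) (L - r).+1 = map e S1.
Proof.
suff gen : forall n, n <= (L - r).+1 -> traject tau' (e q) n = map e (traject tau q n) by apply: gen.
elim=> [|n IH] Hn //.
rewrite !trajectSr map_rcons IH; last by lia.
by rewrite O1_iter; [rewrite Hq -iterD addnC | lia].
Qed.

Lemma traj2 : traject tau' (s (tau k0)) r = map s S2.
Proof.
suff gen : forall n, n <= r -> traject tau' (s (tau k0)) n = map s (traject tau (tau k0) n) by apply: gen.
elim=> [|n IH] Hn //.
rewrite !trajectSr map_rcons IH; last by lia.
by rewrite -H3 -iterSr O2_iter; [rewrite iterSr | lia].
Qed.

Lemma O1E y : fconnect tau' (e q) y = (y \in map e S1).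
Proof. by rewrite (cycle_fconnect y (ltn0Sn _) O1_end) traj1. Qed.

Lemma O2E y : fconnect tau' (s q) y = (y \in map s S2).
Proof.
rewrite (same_fconnect1 itau') H3 (cycle_fconnect y r0) ?traj2 //.
by rewrite -H3 -iterSr iterS O2_end.
Qed.

Lemma S1_C0 y : y \in S1 -> fconnect tau k0 y.
Proof. by case/trajectP => i _ ->; rewrite Hq -iterD; apply: fconnect_iter. Qed.
Lemma S2_C0 y : y \in S2 -> fconnect tau k0 y.
Proof. by case/trajectP => i _ ->; rewrite -iterSr; apply: fconnect_iter. Qed.
Lemma C0_S y : fconnect tau k0 y -> (y \in S1) || (y \in S2).
Proof.
move=> Hy; have jL := findex_max Hy; have Ey := iter_findex Hy.
move: (findex tau k0 y) jL Ey => j jL <-.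
case: (leqP r j) => Hrj.
  apply/orP; left; apply/trajectP; exists (j - r); first by lia.
  by rewrite Hq -iterD subnK.
case: j jL Hrj => [|j] jL Hrj.
  apply/orP; left; apply/trajectP; exists (L - r); first by lia.
  by rewrite Hq -iterD subnK ?(ltnW rL) // iterL.
by apply/orP; right; apply/trajectP; exists j; [lia | rewrite iterSr].
Qed.

Lemma C0_same y : fconnect tau k0 y -> fconnect tau k0 =1 fconnect tau y.
Proof. by move=> Hy; apply: (@same_connect _ (frel tau) (fconnect_sym itau)). Qed.

Lemma orderC0 y : fconnect tau k0 y -> order tau y = L.
Proof. by move=> Hy; apply: eq_card => z; rewrite -!topredE /= (C0_same Hy). Qed.

Lemma Oq : fconnect tau k0 q. Proof. by rewrite Hq fconnect_iter. Qed.

Lemma uS1 : uniq S1.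
Proof.
rewrite -(take_traject _ _ (n := L)); last by lia.
have -> : traject tau q L = orbit tau q by rewrite /orbit orderC0 // Oq.
exact/take_uniq/orbit_uniq.
Qed.
Lemma uS2 : uniq S2.
Proof.
rewrite -(take_traject _ _ (n := L)); last by lia.
have -> : traject tau (tau k0) L = orbit tau (tau k0) by rewrite /orbit orderC0 // fconnect1.
exact/take_uniq/orbit_uniq.
Qed.

Lemma cnt_rel : count I S1 + count I S2 = Wt tau k0 + 1.
Proof.
have -> : Wt tau k0 = count I (traject tau q L).
  rewrite /Wt -(orderC0 Oq) -cardW //; apply: eq_card => z.
  by rewrite !inE (C0_same Oq).
have -> : traject tau q L = S1 ++ traject tau (tau k0) r.-1.
  have E : L = (L - r).+1 + r.-1 by lia.
  rewrite {1}E trajectD; congr (_ ++ traject tau _ _).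
  by rewrite Hq -iterD addSn subnK ?(ltnW rL) // iterS iterL.
have -> : S2 = rcons (traject tau (tau k0) r.-1) q.
  by rewrite -{1}(prednK r0) trajectSr -iterSr prednK // -Hq.
rewrite -cats1 !count_cat /= addn0 addnA.
suff -> : I q by [].
exact: Iq.
Qed.

Lemma WO1 y : fconnect tau' (e q) y -> Wt tau' y = count I S1.
Proof.
move=> Hy; rewrite /Wt.
transitivity #|[pred l | (l \in map e S1) && I' l]|.
  apply: eq_card => l; rewrite -!topredE /= -O1E.
  by rewrite (@same_connect _ (frel tau') (fconnect_sym itau') _ _ Hy).
rewrite card_count ?(map_inj_uniq e_inj) ?uS1 // count_map.
by apply: eq_count => z; rewrite /= Ie.
Qed.

Lemma WO2 y : fconnect tau' (s q) y -> Wt tau' y = count I S2.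
Proof.
move=> Hy; rewrite /Wt.
transitivity #|[pred l | (l \in map s S2) && I' l]|.
  apply: eq_card => l; rewrite -!topredE /= -O2E.
  by rewrite (@same_connect _ (frel tau') (fconnect_sym itau') _ _ Hy).
rewrite card_count ?(map_inj_uniq s_inj) ?uS2 // count_map.
by apply: eq_count => z; rewrite /= Is.
Qed.

Lemma O2_notO1 y : fconnect tau' (s q) y -> ~~ fconnect tau' (e q) y.
Proof.
move=> H2y; apply/negP => H1y.
have : fconnect tau' (e q) (s q).
  by apply: connect_trans H1y _; rewrite fconnect_sym.
by rewrite O1E => /mapP [m _ E]; move: (e_ne_sq m); rewrite E eqxx.
Qed.

Lemma notC0_O1 k : ~~ fconnect tau k0 k -> ~~ fconnect tau' (e q) (e k).
Proof. by rewrite O1E (mem_map e_inj); apply: contra => /S1_C0. Qed.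

Lemma notC0_O2 k : ~~ fconnect tau k0 k -> ~~ fconnect tau' (s q) (e k).
Proof.
move=> Hk; rewrite O2E; apply/negP => /mapP [m Hm E].
case: (eqVneq m q) => [Emq|ne].
  by move: (e_ne_sq k); rewrite E Emq eqxx.
rewrite s_e // in E; move/e_inj: E => E; subst m.
by move: Hk; rewrite S2_C0.
Qed.

Lemma compl y : ~~ fconnect tau' (e q) y -> ~~ fconnect tau' (s q) y ->
  exists2 k, ~~ fconnect tau k0 k & y = e k.
Proof.
move=> n1 n2.
have y1 : y != e q by apply: contraNneq n1 => ->; apply: connect0.
have y2 : y != s q by apply: contraNneq n2 => ->; apply: connect0.
have v1 : (y : nat) != q.
  by apply: contraNneq y1 => E; apply/eqP/val_inj; rewrite /= val_e E ltnn addn0.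
have v2 : (y : nat) != q.+1.
  by apply: contraNneq y2 => E; apply/eqP/val_inj; rewrite /= val_s E leqnn addn1.
have yd := ltn_ord y.
have kd : y - (q < y) < d.+1 by move: v1 v2; case: ltnP => H; lia.
pose k : 'I_d.+1 := Ordinal kd.
have Ek : y = e k.
  apply/val_inj; rewrite /= val_e /=; move: v1 v2; case: (ltnP q y) => H; case: ltnP; lia.
exists k => //; apply/negP => /C0_S /orP [k1|k2].
  by move: n1; rewrite Ek O1E (mem_map e_inj) k1.
have kq : k != q by apply: contraNneq y1 => E; rewrite Ek E.
by move: n2; rewrite Ek -s_e // O2E (mem_map s_inj) k2.
Qed.

Lemma notC0_iter k i : ~~ fconnect tau k0 k -> ~~ fconnect tau k0 (iter i tau k).
Proof.
move=> Hk; apply: contra Hk => H; apply: connect_trans H _.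
by rewrite fconnect_sym // fconnect_iter.
Qed.

Lemma We k : ~~ fconnect tau k0 k -> Wt tau' (e k) = Wt tau k.
Proof.
move=> Hk.
have it : forall i, iter i tau' (e k) = e (iter i tau k).
  elim=> [|i IH] //; rewrite iterS IH.
  have Hy := notC0_iter i Hk.
  have yk : iter i tau k != k0 by apply: contraNneq Hy => ->; apply: connect0.
  rewrite H1 // s_e // -iterS.
  by apply: contraNneq (notC0_iter i.+1 Hk) => ->; apply: Oq.
rewrite /Wt -(card_image e_inj); apply: eq_card => l; rewrite -!topredE /=.
apply/idP/idP.
  case/andP => Hl Il; have El := iter_findex Hl; move: (findex _ _ _) El => j El; subst l.
  rewrite it in Il *; apply: image_f; rewrite -topredE /= fconnect_iter /=.
  by change (I (iter j tau k)); rewrite -Ie.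
case/imageP => m; rewrite -topredE /= => /andP [Hm Im] ->.
apply/andP; split; last by change (I' (e m)); rewrite Ie.
by rewrite -(iter_findex Hm) -it fconnect_iter.
Qed.

Lemma core_count x : Nt tau' x + (x == Wt tau k0) * x =
  Nt tau x + (x == count I S1) * x + (x == count I S2) * x.
Proof.
rewrite /Nt (card_split (fun y : 'I_d.+2 => (0 < y < d.+1) && (Wt tau' y == x)) (fconnect tau' (e q))).
rewrite (card_split (fun y : 'I_d.+2 => ~~ fconnect tau' (e q) y && ((0 < y < d.+1) && (Wt tau' y == x))) (fconnect tau' (s q))).
rewrite (card_split (fun y : 'I_d.+1 => (0 < y < d) && (Wt tau y == x)) (fconnect tau k0)).
have -> : #|[pred y | fconnect tau' (e q) y && ((0 < y < d.+1) && (Wt tau' y == x))]| = (x == count I S1) * count I S1.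
  apply: card_class; first by move=> y; apply: WO1.
  by rewrite -(WO1 (connect0 _ _)).
have -> : #|[pred y | fconnect tau' (s q) y && (~~ fconnect tau' (e q) y && ((0 < y < d.+1) && (Wt tau' y == x)))]|
    = (x == count I S2) * count I S2.
  transitivity #|[pred y | fconnect tau' (s q) y && ((0 < y < d.+1) && (Wt tau' y == x))]|.
    apply: eq_card => y; rewrite !inE; case Hy: (fconnect tau' (s q) y) => //=.
    by rewrite (O2_notO1 Hy).
  apply: card_class; first by move=> y; apply: WO2.
  by rewrite -(WO2 (connect0 _ (s q))).
have -> : #|[pred k | fconnect tau k0 k && ((0 < k < d) && (Wt tau k == x))]| = (x == Wt tau k0) * Wt tau k0.
  apply: card_class => //; move=> y Hy; rewrite /Wt; apply: eq_card => z; rewrite !inE (C0_same Hy) //.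
have -> : #|[pred y | ~~ fconnect tau' (s q) y && (~~ fconnect tau' (e q) y && ((0 < y < d.+1) && (Wt tau' y == x)))]|
   = #|[pred k | ~~ fconnect tau k0 k && ((0 < k < d) && (Wt tau k == x))]|.
  rewrite -(card_image e_inj); apply: eq_card => y; rewrite -!topredE /=.
  apply/idP/idP.
    case/and3P => n2 n1 Ay; have [k Hk Ek] := compl n1 n2; subst y.
    apply: image_f; rewrite -topredE /= Hk /=; move: Ay; rewrite We //.
    by rewrite -[0 < e k < d.+1]/(I' (e k)) Ie.
  case/imageP => k; rewrite -topredE /= => /andP [Hk Ak] ->.
  rewrite (notC0_O1 Hk) (notC0_O2 Hk) We // /=.
  by rewrite -[0 < e k < d.+1]/(I' (e k)) Ie.
by case: eqP => [->|]; case: eqP => [->|]; case: eqP => [->|] => *; lia.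
Qed.
End Core.

Lemma choose_r d (tau : 'I_d.+1 -> 'I_d.+1) (itau : injective tau) (k0 : 'I_d.+1) m11 m12 :
  0 < m11 -> 0 < m12 -> Wt tau k0 = (m11 + m12).+1 ->
  exists r, [/\ 0 < r, r < order tau k0, 0 < iter r tau k0 < d &
                count (@I d) (traject tau (tau k0) r) = m12.+1].
Proof.
move=> h11 h12 HW.
pose f j := count (@I d) (traject tau (tau k0) j).
have fS j : f j.+1 = f j + I (iter j.+1 tau k0).
  by rewrite /f trajectSr -cats1 count_cat /= addn0 -iterSr.
have ordE : order tau (tau k0) = order tau k0.
  apply: eq_card => z; rewrite -!topredE /=.
  by rewrite (@same_connect _ (frel tau) (fconnect_sym itau) _ _ (fconnect1 _ k0)).
have fL : f (order tau k0) = (m11 + m12).+1.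
  rewrite /f -ordE -[traject _ _ _]/(orbit tau (tau k0)) -cardW // -HW /Wt.
  apply: eq_card => z; rewrite !inE.
  by rewrite (@same_connect _ (frel tau) (fconnect_sym itau) _ _ (fconnect1 _ k0)).
have ex : exists j, m12.+1 <= f j.
  by exists (order tau k0); rewrite fL; lia.
case: (ex_minnP ex) => r Hr Hmin.
case: r Hr Hmin => [|r] Hr Hmin; first by rewrite /f /= in Hr.
have Hr' : f r < m12.+1 by rewrite ltnNge; apply/negP => /Hmin; lia.
have rL : r.+1 <= order tau k0 by apply: Hmin; rewrite fL; lia.
move: Hr; rewrite fS => Hr.
have Ii : I (iter r.+1 tau k0) by move: Hr Hr'; case: (I _) => /=; lia.
exists r.+1; split => //.
  case: (ltngtP r.+1 (order tau k0)) rL => // E _.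
  rewrite -E in fL.
  have := fS r; rewrite fL.
  by move: Hr Hr'; case: (I _) => /=; lia.
have := fS r; rewrite -/(f r.+1) => ->.
by move: Hr Hr' Ii; case: (I _) => /=; lia.
Qed.

Lemma core_gen d d' (hd : d' = d.+1) (tau : 'I_d.+1 -> 'I_d.+1) (tau' : 'I_d'.+1 -> 'I_d'.+1)
  (k0 q : 'I_d.+1) r :
  injective tau -> injective tau' -> 0 < r -> r < order tau k0 -> q = iter r tau k0 -> 0 < q < d ->
  (forall k : 'I_d.+1, k != k0 -> (tau' (inord (k + (q < k))) : nat) = tau k + (q <= tau k)) ->
  (tau' (inord (k0 + (q < k0))) : nat) = q ->
  (tau' (inord q.+1) : nat) = tau k0 + (q <= tau k0) ->
  forall x, Nt tau' x + (x == Wt tau k0) * x =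
     Nt tau x + (x == count (@I d) (traject tau q (order tau k0 - r).+1)) * x
              + (x == count (@I d) (traject tau (tau k0) r)) * x.
Proof.
move=> it it' r0 rL Hq Iq h1 h2 h3; subst d'.
apply: (core_count it it' r0 rL Hq Iq).
- move=> k kk0; apply/val_inj; rewrite /= [in RHS](val_s (tau:=tau) (k0:=k0) r0 rL Iq) -h1 //.
- by apply/val_inj; rewrite /= [in RHS](val_e (tau:=tau) (k0:=k0) r0 rL Iq) ltnn addn0 -h2.
- by apply/val_inj; rewrite /= [in RHS](val_s (tau:=tau) (k0:=k0) r0 rL Iq) -h3 /s leqnn addn1.
Qed.

Lemma fresh_notin (t : seq nat) : (sumn t).+1 \notin t.
Proof.
suff H : forall x, x \in t -> x <= sumn t by apply/negP => /H; lia.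
elim: t => //= y t IH x; rewrite inE => /orP [/eqP ->|/IH]; lia.
Qed.

Theorem lemma6p5 (t b : seq nat) (m1 : nat) (ms : seq nat) (m11 m12 : nat) :
  is_perm t b -> standard t b ->
  in_stratum t b (m1 :: ms) -> 2 <= m1 -> all (fun m => 1 <= m) ms ->
  1 <= m11 -> 1 <= m12 -> m11 + m12 = m1 ->
  exists t' b' : seq nat,
    [/\ is_perm t' b', simple_extension t b t' b', irreducible t' b'
      & in_stratum t' b' [:: m11, m12 & ms]].
Proof.
move=> Hp [Hst1 Hst2] Hstr Hm1 Hms H11 H12 Hsum.
have [_ HN] := (char Hp (m1 :: ms)).1 Hstr.
pose tau := @tauo t b.
have itau : injective tau := tauo_inj Hp.
have HNm := HN m1 (leq_trans (isT : 0 < 2) Hm1).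
have cge : 1 <= count_mem m1 (m1 :: ms) by rewrite /= eqxx.
have Hcard : 1 < Nt tau m1.+1.
  by rewrite HNm; apply: leq_trans (leq_pmulr _ cge); lia.
have [k0 Hk0] : exists k0 : 'I_(size t).+1,
    (k0 != inord 1) && ((0 < k0 < size t) && (Wt tau k0 == m1.+1)).
  rewrite /Nt (cardD1 (inord 1)) in Hcard.
  have : 0 < #|[predD1 [pred k : 'I_(size t).+1 | (0 < k < size t) && (Wt tau k == m1.+1)] & inord 1]|.
    by move: Hcard; case: (_ \in _) => /=; [rewrite add1n ltnS | rewrite add0n; apply: ltnW].
  by case/card_gt0P => k0; rewrite !inE => H; exists k0.
case/andP: Hk0 => k01 /andP [Ik0 /eqP Wk0].
have sz2 : 1 < size t by lia.
have k0n1 : (k0 : nat) != 1.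
  by apply: contraNneq k01 => E; apply/eqP/val_inj; rewrite /= E inordK //; lia.
have Wk0' : Wt tau k0 = (m11 + m12).+1 by rewrite Hsum.
have [r [r0 rL Iq Hc2]] := @choose_r _ tau itau k0 m11 m12 H11 H12 Wk0'.
set qo := iter r tau k0 in Iq Hc2.
pose q : nat := qo.
pose p := gE t b k0.
have k0d : k0 <= size t by lia.
have fEd : fE t b (size t) = 1.
  rewrite /fE; case: eqP => [E|_]; first by lia.
  by rewrite Hst1.
have pd : p < size t.
  have := gE_le Hp k0d; rewrite leq_eqVlt => /orP [/eqP E|//].
  by have := fE_gE Hp k0d; rewrite E fEd => E1; move: k0n1; rewrite -E1 eqxx.
have p1 : 0 < p by rewrite /p /gE; case: eqP => //; lia.
have qd : q < size t by rewrite /q; lia.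
pose a := (sumn t).+1.
have Ha : a \notin t := fresh_notin t.
pose be := nth 0 t p.
pose be' := nth 0 b q.
have ib : index be t = p := index_uniq 0 pd (ut Hp).
have ib' : index be' b = q by apply: index_uniq; rewrite ?(sb Hp) ?(ub Hp).
have Hp' := perm_t' p q Hp Ha.
exists (ins t p a), (ins b q a); split => //.
- exists a, be, be'; split; last by rewrite /insert_before ib ib'.
  split => //; first by rewrite mem_nth.
    by rewrite (mtb Hp) mem_nth // (sb Hp).
  case=> E _; have := nth_uniq 0 pd (leq_ltn_trans (leq0n p) pd) (ut Hp).
  by rewrite -/be E eqxx => /esym /eqP; lia.
- move=> j /andP [j1 jd] H.
  rewrite (size_t' a pd) in jd.
  pose x0 := nth 0 t 0.
  have n0 : nth 0 (ins t p a) 0 = x0.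
    by have := nth_ins_s a (ltnW pd) 0; rewrite leqNgt p1 addn0.
  have x0in : x0 \in take j (ins t p a).
    rewrite -n0 -(nth_take 0 j1); apply: mem_nth.
    by rewrite size_takel // (size_t' a pd) ltnW.
  rewrite H in x0in.
  have x0b : x0 \in b by rewrite -(mtb Hp); apply: mem_nth; apply: ltn_trans sz2.
  have qb : q <= size b by rewrite (sb Hp); lia.
  rewrite in_take in x0in; last by rewrite mem_ins x0b orbT.
  move: x0in; rewrite (index_ins qb (Hab Hp Ha) x0b).
  have -> : index x0 b = (size t).-1 by rewrite /x0 -Hst2.
  have -> : q <= (size t).-1 by lia.
  lia.
- apply/(char Hp'); split; first by rewrite /= H11 H12.
  move=> n n0.
  have it' := tauo_inj Hp'.
  have gEinj : forall k : 'I_(size t).+1, gE t b k = p -> k = k0.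
    move=> k E; apply/val_inj => /=.
    by rewrite -(fE_gE Hp (ltn_ord k : (k : nat) <= size t)) E /p (fE_gE Hp k0d).
  have szt : size (ins t p a) = (size t).+1 := size_t' a pd.
  have h1 : forall k : 'I_(size t).+1, k != k0 ->
      (@tauo (ins t p a) (ins b q a) (inord (k + (qo < k))) : nat) = tau k + (qo <= tau k).
    move=> k kk0.
    have kd : (k : nat) <= size t := ltn_ord k.
    have kb : k + (qo < k) < (size (ins t p a)).+1.
      by rewrite szt; have := leq_b1 (qo < k); lia.
    rewrite (tauoE Hp') (inordK kb) (taun'_e Hp Ha pd qd kd) (tauoE Hp) ifN //.
    by apply: contra kk0 => /eqP /gEinj ->.
  have h2 : (@tauo (ins t p a) (ins b q a) (inord (k0 + (qo < k0))) : nat) = qo.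
    have kb : k0 + (qo < k0) < (size (ins t p a)).+1.
      by rewrite szt; have := leq_b1 (qo < k0); lia.
    by rewrite (tauoE Hp') (inordK kb) (taun'_e Hp Ha pd qd k0d) eqxx.
  have h3 : (@tauo (ins t p a) (ins b q a) (inord qo.+1) : nat) = tau k0 + (qo <= tau k0).
    have kb : qo.+1 < (size (ins t p a)).+1 by rewrite szt; lia.
    by rewrite (tauoE Hp') (inordK kb) (taun'_q1 Hp Ha pd qd) (tauoE Hp).
  have core := core_gen szt itau it' r0 rL (erefl qo) Iq h1 h2 h3 n.+1.
  have c1 := cnt_rel itau r0 rL (erefl qo) Iq.
  rewrite Wk0 Hc2 in core c1.
  have cS1 : count (@I (size t)) (traject tau qo (order tau k0 - r).+1) = m11.+1 by lia.
  rewrite cS1 (HN n n0) in core.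
  move: core; rewrite /= !eqSS.
  rewrite [m1 == n]eq_sym [m11 == n]eq_sym [m12 == n]eq_sym.
  case: (n == m1); case: (n == m11); case: (n == m12) => /=; nia.
Qed.
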